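(* Let $A$ be a commutative $K$-algebra, $\mathcal{D}=\mathcal{D}(A)$, and $\mathcal{D}_{[0]}=\{\delta\in\mathcal{D}\mid\delta*1=0\}$. Then: (1) The set of left $\mathcal{D}$-submodules of the $\mathcal{D}$-module $A$ equals the set of $\mathcal{D}$-stable ideals of $A$ (ideals $\mathfrak{a}$ with $\mathcal{D}*\mathfrak{a}\subseteq\mathfrak{a}$). (2) The $\mathcal{D}$-module $A$ is simple if and only if $A$ has no nonzero proper $\mathcal{D}$-stable ideal. (3) The map $\mathfrak{a}\mapsto\mathfrak{a}+\mathcal{D}_{[0]}$, from the set of $\mathcal{D}$-stable ideals of $A$ containing $\mathcal{D}_{[0]}*A$ to the set of ideals of $\mathcal{D}$ containing $\mathcal{D}_{[0]}$, is a bijection with inverse $I\mapsto I\cap A$. The ideal $\mathcal{D}\mathcal{D}_{[0]}\mathcal{D}=\mathcal{D}_{[0]}*A+\mathcal{D}_{[0]}$ is the least ideal of $\mathcal{D}$ containing $\mathcal{D}_{[0]}$, and $\mathcal{D}_{[0]}*A=A\cap\mathcal{D}\mathcal{D}_{[0]}\mathcal{D}$ is a $\mathcal{D}$-stable ideal of $A$.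
   Context: $\mathcal{D}(A)=\bigcup_{i\ge0}\mathcal{D}(A)_i\subseteq\mathrm{End}_K(A)$ with $\mathcal{D}(A)_{-1}=0$, $\mathcal{D}(A)_i=\{u\mid au-ua\in\mathcal{D}(A)_{i-1}\ \forall a\in A\}$; $A\subseteq\mathcal{D}(A)$ via multiplication operators. $A$ is a left $\mathcal{D}(A)$-module via $\delta*a=\delta(a)$, and $\mathcal{D}_{[0]}*A$ denotes the $K$-span of $\{\delta*a\mid\delta\in\mathcal{D}_{[0]},a\in A\}$. *)

(* Defs.v *)
From mathcomp Require Import all_boot all_order all_algebra.
Set Implicit Arguments. Unset Strict Implicit. Unset Printing Implicit Defensive.
Import GRing.Theory.
Local Open Scope ring_scope.

(* Operators on A are Rocq functions A -> A; End_K(A) = the K-linear ones.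
   Subsets are predicates (Prop-valued). Composition (\o) is the product in D. *)
Section DiffOps.
Variables (K : fieldType) (A : comAlgType K).

Definition Klinear (u : A -> A) : Prop :=
  forall (k : K) (x y : A), u (k *: x + y) = k *: u x + u y.

Definition mulop (a : A) : A -> A := fun x => a * x.

Definition commop (a : A) (u : A -> A) : A -> A := fun x => a * u x - u (a * x).

(* D(A)_i, with D(A)_{-1} = 0, so D(A)_0 = {u | a u - u a = 0 for all a} *)
Fixpoint diffop (i : nat) (u : A -> A) : Prop :=
  Klinear u /\
  match i with
  | 0%N => forall a x, commop a u x = 0
  | i'.+1 => forall a, diffop i' (commop a u)
  end.

Definition isD (u : A -> A) : Prop := exists i, diffop i u.

Definition D0 (d : A -> A) : Prop := isD d /\ d 1 = 0.

Definition isDIdeal (I : (A -> A) -> Prop) : Prop :=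
  [/\ forall u, I u -> isD u,
      I (fun _ => 0),
      forall u v, I u -> I v -> I (fun x => u x - v x)
    & forall u v, isD u -> I v -> I (u \o v) /\ I (v \o u)].

Definition isAIdeal (a : A -> Prop) : Prop :=
  [/\ a 0, forall x y, a x -> a y -> a (x - y) & forall r x, a x -> a (r * x)].

Definition isDsubmodule (M : A -> Prop) : Prop :=
  [/\ M 0, forall x y, M x -> M y -> M (x - y)
    & forall d x, isD d -> M x -> M (d x)].

Definition isDstableIdeal (a : A -> Prop) : Prop :=
  isAIdeal a /\ forall d x, isD d -> a x -> a (d x).

Definition Dsimple : Prop :=
  (exists x : A, x != 0) /\
  forall M, isDsubmodule M -> (forall x, M x -> x = 0) \/ (forall x, M x).

Definition D0A (x : A) : Prop :=
  exists n (k : 'I_n -> K) (d : 'I_n -> A -> A) (b : 'I_n -> A),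
    (forall i, D0 (d i)) /\ x = \sum_(i < n) k i *: d i (b i).

Definition DD0D (f : A -> A) : Prop :=
  exists n (u d v : 'I_n -> A -> A),
    (forall i, [/\ isD (u i), D0 (d i) & isD (v i)]) /\
    f = (fun x => \sum_(i < n) u i (d i (v i x))).

(* a |-> a + D_[0]  (a viewed inside D via multiplication operators) *)
Definition plusD0 (a : A -> Prop) : (A -> A) -> Prop :=
  fun f => exists b d, a b /\ D0 d /\ f = (fun x => b * x + d x).

Definition capA (I : (A -> A) -> Prop) : A -> Prop := fun b => I (mulop b).

End DiffOps.

(* Main.v *)
Require Import Defs.
From mathcomp Require Import all_boot all_order all_algebra.
From Stdlib Require Import FunctionalExtensionality Classical.
Set Implicit Arguments. Unset Strict Implicit. Unset Printing Implicit Defensive.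
Import GRing.Theory.
Local Open Scope ring_scope.

Section H.
Variables (K : fieldType) (A : comAlgType K).
Implicit Types (u v f g d : A -> A) (x y b : A).

Lemma Pext (T : Type) (P : (A -> T) -> Prop) (f g : A -> T) :
  (forall x, f x = g x) -> P f -> P g.
Proof. by move/functional_extensionality ->. Qed.

Lemma klin0 u : Klinear u -> u 0 = 0.
Proof.
move=> Hu; have h := Hu 1 0 0; rewrite scaler0 addr0 scale1r in h.
by apply: (addrI (u 0)); rewrite addr0 -h.
Qed.

Lemma klinD u : Klinear u -> forall x y, u (x + y) = u x + u y.
Proof. by move=> Hu x y; have := Hu 1 x y; rewrite !scale1r. Qed.

Lemma klinZ u : Klinear u -> forall k x, u (k *: x) = k *: u x.
Proof. by move=> Hu k x; have := Hu k x 0; rewrite !addr0 (klin0 Hu) addr0. Qed.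

Lemma klinN u : Klinear u -> forall x, u (- x) = - u x.
Proof. by move=> Hu x; rewrite -scaleN1r klinZ // scaleN1r. Qed.

Lemma klinB u : Klinear u -> forall x y, u (x - y) = u x - u y.
Proof. by move=> Hu x y; rewrite klinD // klinN. Qed.

Lemma klin_sum u n (F : 'I_n -> A) : Klinear u ->
  u (\sum_(i < n) F i) = \sum_(i < n) u (F i).
Proof. by move=> Hu; apply: (big_morph u (klinD Hu) (klin0 Hu)). Qed.

Lemma mulZr a (k : K) x : a * (k *: x) = k *: (a * x).
Proof. by rewrite scalerAr. Qed.

Lemma klin_commop a u : Klinear u -> Klinear (commop a u).
Proof.
move=> Hu k x y; rewrite /commop Hu !mulrDr !mulZr Hu scalerBr.
by rewrite opprD addrACA.
Qed.

Lemma klin_comb c u v : Klinear u -> Klinear v -> Klinear (fun x => c *: u x + v x).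
Proof.
move=> Hu Hv k x y; rewrite Hu Hv !scalerDr !scalerA [c * k]mulrC.
by rewrite addrACA.
Qed.

Lemma klin_comp u v : Klinear u -> Klinear v -> Klinear (u \o v).
Proof. by move=> Hu Hv k x y /=; rewrite Hv Hu. Qed.

Lemma commop_comb a c u v x :
  commop a (fun x => c *: u x + v x) x = c *: commop a u x + commop a v x.
Proof. by rewrite /commop mulrDr mulZr scalerBr opprD addrACA. Qed.

Lemma commop_comp a u v x : Klinear u ->
  commop a (u \o v) x = commop a u (v x) + u (commop a v x).
Proof. by move=> Hu; rewrite /commop /= klinB // addrA subrK. Qed.

Lemma diffop_lin i u : diffop i u -> Klinear u.
Proof. by case: i => [[]|i []]. Qed.

Lemma diffop_zero_ext i f : (forall x, f x = 0) -> diffop i f.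
Proof.
move/functional_extensionality ->.
elim: i => [|i IH] /=; split.
- by move=> k x y; rewrite scaler0 addr0.
- by move=> a x; rewrite /commop mulr0 subrr.
- by move=> k x y; rewrite scaler0 addr0.
- move=> a; apply: Pext IH => x; by rewrite /commop mulr0 subrr.
Qed.

Lemma diffop_S i u : diffop i u -> diffop i.+1 u.
Proof.
elim: i u => [|i IH] u /=.
- case=> Hl H0; split=> // a; exact: (@diffop_zero_ext 0%N _ (H0 a)).
- case=> Hl H; split=> // a; exact: IH.
Qed.

Lemma diffop_mono i j u : (i <= j)%N -> diffop i u -> diffop j u.
Proof.
move/subnK <-; elim: (j - i)%N => [|k IH] // h.
by rewrite addSn; apply: diffop_S; apply: IH.
Qed.

Lemma diffop_comb i c u v : diffop i u -> diffop i v ->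
  diffop i (fun x => c *: u x + v x).
Proof.
elim: i u v => [|i IH] u v /= [Lu Hu] [Lv Hv]; split; try exact: klin_comb.
- by move=> a x; rewrite commop_comb Hu Hv scaler0 addr0.
- move=> a; apply: Pext (IH _ _ (Hu a) (Hv a)) => x; by rewrite commop_comb.
Qed.

Lemma diffop_add i u v : diffop i u -> diffop i v -> diffop i (fun x => u x + v x).
Proof. move=> Hu Hv; apply: Pext (diffop_comb 1 Hu Hv) => x; by rewrite scale1r. Qed.

Lemma diffop_comp m : forall i j u v, (i + j <= m)%N -> diffop i u -> diffop j v ->
  diffop m (u \o v).
Proof.
elim: m => [|m IH] i j u v.
- rewrite leqn0 addn_eq0 => /andP[/eqP-> /eqP->] [Lu Hu] [Lv Hv]; split.
    exact: klin_comp.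
  by move=> a x; rewrite commop_comp // Hu Hv klin0 // addr0.
- move=> hij Du Dv; have Lu := diffop_lin Du; have Lv := diffop_lin Dv.
  split; first exact: klin_comp.
  move=> a; apply: Pext (fun x => esym (commop_comp a v x Lu)) _.
  apply: diffop_add.
  + move: hij Du; case: i => [|i] hij Du.
      by apply: diffop_zero_ext => x; case: Du => _ ->.
    case: Du => _ Du; apply: (IH i j) => //; exact: Du.
  + move: hij Dv; case: j => [|j] hij Dv.
      by apply: diffop_zero_ext => x; rewrite (proj2 Dv) klin0.
    case: Dv => _ Dv; apply: (IH i j) => //; [by rewrite addnS in hij | exact: Dv].
Qed.

Lemma isD_lin u : isD u -> Klinear u.
Proof. by case=> i /diffop_lin. Qed.

Lemma isD_comb c u v : isD u -> isD v -> isD (fun x => c *: u x + v x).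
Proof.
case=> i Hi [j Hj]; exists (maxn i j); apply: diffop_comb.
  exact: diffop_mono (leq_maxl i j) Hi.
exact: diffop_mono (leq_maxr i j) Hj.
Qed.

Lemma isD_zero : isD (fun _ : A => (0 : A)).
Proof. by exists 0%N; apply: diffop_zero_ext. Qed.

Lemma isD_add u v : isD u -> isD v -> isD (fun x => u x + v x).
Proof. move=> Hu Hv; apply: Pext (isD_comb 1 Hu Hv) => x; by rewrite scale1r. Qed.

Lemma isD_neg u : isD u -> isD (fun x => - u x).
Proof. move=> Hu; apply: Pext (isD_comb (-1) Hu isD_zero) => x; by rewrite addr0 scaleN1r. Qed.

Lemma isD_sub u v : isD u -> isD v -> isD (fun x => u x - v x).
Proof. by move=> Hu Hv; apply: isD_add Hu (isD_neg Hv). Qed.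

Lemma isD_comp u v : isD u -> isD v -> isD (u \o v).
Proof. case=> i Hi [j Hj]; exists (i + j)%N; exact: diffop_comp Hi Hj. Qed.

Lemma isD_mulop b : isD (mulop b).
Proof.
exists 0%N; split.
  by move=> k x y; rewrite /mulop mulrDr mulZr.
by move=> a x; rewrite /commop /mulop mulrCA subrr.
Qed.

Lemma isD_id : isD (@id A).
Proof. exists 0%N; split=> // a x; by rewrite /commop subrr. Qed.

Lemma isD_sc (k : K) : isD (fun x => k *: x).
Proof.
exists 0%N; split.
  by move=> c x y; rewrite scalerDr !scalerA mulrC.
by move=> a x; rewrite /commop mulZr subrr.
Qed.

Lemma isD_sum n (F : 'I_n -> A -> A) : (forall i, isD (F i)) ->
  isD (fun x => \sum_(i < n) F i x).
Proof.
elim: n F => [|n IH] F HF.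
  by apply: Pext isD_zero => x; rewrite big_ord0.
apply: Pext (isD_add (IH (fun i => F (widen_ord (leqnSn n) i)) (fun i => HF _)) (HF ord_max)).
by move=> x; rewrite big_ord_recr.
Qed.


Definition eps f : A -> A := fun x => f x - f 1 * x.

Lemma D0_zero : D0 (fun _ : A => (0 : A)).
Proof. by split; [exact: isD_zero|]. Qed.

Lemma D0_eps f : isD f -> D0 (eps f).
Proof.
move=> Df; split; first exact: (isD_sub Df (isD_mulop (f 1))).
by rewrite /eps mulr1 subrr.
Qed.

Lemma eps_dec f x : f x = f 1 * x + eps f x.
Proof. by rewrite /eps addrC subrK. Qed.

Lemma D0_comp u d : isD u -> D0 d -> D0 (u \o d).
Proof. move=> Du [Dd d1]; split; first exact: isD_comp. by rewrite /= d1 klin0 //; exact: isD_lin Du. Qed.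

Lemma plusD0_char (P : A -> Prop) f : plusD0 P f <-> isD f /\ P (f 1).
Proof.
split.
- case=> b [d [Pb [[Dd d1] ->]]]; split.
    exact: (isD_add (isD_mulop b) Dd).
  by rewrite mulr1 d1 addr0.
- case=> Df Pf; exists (f 1), (eps f); split => //; split; first exact: D0_eps.
  apply: functional_extensionality => x; exact: eps_dec.
Qed.

Lemma split_l m n (i : 'I_m) : split (lshift n i) = inl i.
Proof. exact: (unsplitK (inl i)). Qed.
Lemma split_r m n (i : 'I_n) : split (rshift m i) = inr i.
Proof. exact: (unsplitK (inr i)). Qed.

Definition glue (T : Type) m n (f : 'I_m -> T) (g : 'I_n -> T) : 'I_(m + n) -> T :=
  fun i => match split i with inl j => f j | inr j => g j end.

Lemma glue_l (T : Type) m n (f : 'I_m -> T) (g : 'I_n -> T) i : glue f g (lshift n i) = f i.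
Proof. by rewrite /glue split_l. Qed.
Lemma glue_r (T : Type) m n (f : 'I_m -> T) (g : 'I_n -> T) i : glue f g (rshift m i) = g i.
Proof. by rewrite /glue split_r. Qed.

Lemma D0A0 : D0A (0 : A).
Proof.
exists 0%N, (fun _ => 0), (fun _ _ => 0), (fun _ => 0); split; last by rewrite big_ord0.
move=> i; exact: D0_zero.
Qed.

Lemma D0A_add x y : D0A x -> D0A y -> D0A (x + y).
Proof.
case=> n1 [k1 [d1 [b1 [H1 ->]]]] [n2 [k2 [d2 [b2 [H2 ->]]]]].
exists (n1 + n2)%N, (glue k1 k2), (glue d1 d2), (glue b1 b2); split.
  by move=> i; rewrite /glue; case: (split i).
rewrite big_split_ord /=; congr (_ + _); apply: eq_bigr => i _.
  by rewrite !glue_l.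
by rewrite !glue_r.
Qed.

Lemma D0A_map u x : isD u -> D0A x -> D0A (u x).
Proof.
move=> Du [n [k [d [b [H ->]]]]].
exists n, k, (fun i => u \o d i), b; split.
  move=> i; exact: D0_comp.
rewrite klin_sum; last exact: isD_lin.
by apply: eq_bigr => i _; rewrite klinZ //; exact: isD_lin.
Qed.

Lemma D0A_scale (c : K) x : D0A x -> D0A (c *: x).
Proof. exact: (D0A_map (isD_sc c)). Qed.

Lemma D0A_sub x y : D0A x -> D0A y -> D0A (x - y).
Proof. move=> Hx Hy; apply: D0A_add Hx _; rewrite -scaleN1r; exact: D0A_scale. Qed.

Lemma D0A_single d b : D0 d -> D0A (d b).
Proof.
move=> Dd; exists 1%N, (fun _ => 1), (fun _ => d), (fun _ => b); split => //.
by rewrite big_ord1 scale1r.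
Qed.

Lemma D0A_stable : isDstableIdeal (@D0A K A).
Proof.
split; last by move=> d x Dd; exact: D0A_map.
split.
- exact: D0A0.
- exact: D0A_sub.
- move=> r x; exact: (D0A_map (isD_mulop r)).
Qed.

Lemma DD0D_zero : DD0D (fun _ : A => (0 : A)).
Proof.
exists 0%N, (fun _ => id), (fun _ _ => 0), (fun _ => id); split.
  by move=> [].
by apply: functional_extensionality => x; rewrite big_ord0.
Qed.

Lemma DD0D_single u d v : isD u -> D0 d -> isD v -> DD0D (fun x => u (d (v x))).
Proof.
move=> Du Dd Dv; exists 1%N, (fun _ => u), (fun _ => d), (fun _ => v); split => //.
by apply: functional_extensionality => x; rewrite big_ord1.
Qed.

Lemma DD0D_add f g : DD0D f -> DD0D g -> DD0D (fun x => f x + g x).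
Proof.
case=> n1 [u1 [d1 [v1 [H1 ->]]]] [n2 [u2 [d2 [v2 [H2 ->]]]]].
exists (n1 + n2)%N, (glue u1 u2), (glue d1 d2), (glue v1 v2); split.
  by move=> i; rewrite /glue; case: (split i).
apply: functional_extensionality => x.
rewrite big_split_ord /=; congr (_ + _); apply: eq_bigr => i _.
  by rewrite !glue_l.
by rewrite !glue_r.
Qed.

Lemma DD0D_neg f : DD0D f -> DD0D (fun x => - f x).
Proof.
case=> n [u [d [v [H ->]]]].
exists n, (fun i x => - u i x), d, v; split.
  by move=> i; case: (H i) => Du Dd Dv; split => //; exact: isD_neg.
by apply: functional_extensionality => x; rewrite sumrN.
Qed.

Lemma DD0D_sum n (F : 'I_n -> A -> A) : (forall i, DD0D (F i)) ->
  DD0D (fun x => \sum_(i < n) F i x).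
Proof.
elim: n F => [|n IH] F HF.
  by apply: Pext DD0D_zero => x; rewrite big_ord0.
apply: Pext (DD0D_add (IH (fun i => F (widen_ord (leqnSn n) i)) (fun i => HF _)) (HF ord_max)).
by move=> x; rewrite big_ord_recr.
Qed.

Lemma DD0D_isD f : DD0D f -> isD f.
Proof.
case=> n [u [d [v [H ->]]]].
apply: (isD_sum (F := fun i => u i \o (d i \o v i))) => i.
case: (H i) => Du [Dd _] Dv; apply: isD_comp Du (isD_comp Dd Dv).
Qed.

Lemma DD0D_compl u f : isD u -> DD0D f -> DD0D (u \o f).
Proof.
move=> Du [n [uu [d [v [H ->]]]]].
exists n, (fun i => u \o uu i), d, v; split.
  by move=> i; case: (H i) => D1 D2 D3; split => //; exact: isD_comp.
apply: functional_extensionality => x /=; rewrite klin_sum //; exact: isD_lin.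
Qed.

Lemma DD0D_compr u f : isD u -> DD0D f -> DD0D (f \o u).
Proof.
move=> Du [n [uu [d [v [H ->]]]]].
exists n, uu, d, (fun i => v i \o u); split => //.
by move=> i; case: (H i) => D1 D2 D3; split => //; exact: isD_comp.
Qed.

Lemma DD0D_1 f : DD0D f -> D0A (f 1).
Proof.
case=> n [u [d [v [H ->]]]].
exists n, (fun _ => 1), (fun i => u i \o d i), (fun i => v i 1); split.
  by move=> i; case: (H i) => D1 D2 D3; exact: D0_comp.
by apply: eq_bigr => i _; rewrite scale1r.
Qed.

Lemma DD0D_mulop x : D0A x -> DD0D (mulop x).
Proof.
case=> n [k [d [b [H ->]]]].
pose F i := fun y => (k i *: d i (b i)) * y.
apply: (Pext (f := fun y => \sum_(i < n) F i y)).
  by move=> y; rewrite /mulop mulr_suml.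
apply: DD0D_sum => i; rewrite /F.
pose g := d i \o mulop (b i).
have Dg : isD g by apply: isD_comp (isD_mulop _); case: (H i).
apply: (Pext (f := fun y => (fun z => k i *: z) (d i (mulop (b i) (id y))) +
                 (fun z => (- k i) *: z) (eps g (id y)))).
  move=> y /=; rewrite -scalerAl scaleNr -scalerBr; congr (_ *: _).
  rewrite /eps /g /= /mulop mulr1 opprB addrC subrK //.
apply: Pext (DD0D_add (DD0D_single (isD_sc (k i)) (H i) (isD_mulop (b i)))
                   (DD0D_single (isD_sc (- k i)) (D0_eps Dg) isD_id)) => y.
reflexivity.
Qed.

Lemma DD0D_char f : DD0D f <-> isD f /\ D0A (f 1).
Proof.
split.
  by move=> H; split; [exact: DD0D_isD | exact: DD0D_1].
case=> Df H1; apply: (Pext (fun x => esym (eps_dec f x))).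
exact: (DD0D_add (DD0D_mulop H1) (DD0D_single isD_id (D0_eps Df) isD_id)).
Qed.


Lemma part1 (M : A -> Prop) : @isDsubmodule K A M <-> @isDstableIdeal K A M.
Proof.
split.
- case=> M0 Msub MD; split => //; split => // r x Mx.
  exact: (MD (mulop r) x (isD_mulop r) Mx).
- by case=> [[a0 asub amul] aD]; split.
Qed.

Lemma part2 : Dsimple A <->
  ~ (exists a : A -> Prop, @isDstableIdeal K A a /\
          (exists x, a x /\ x != 0) /\ (exists y, ~ a y)).
Proof.
split.
- case=> _ Hs [a [Ha [[x [ax nx]] [y ny]]]].
  case: (Hs a (proj2 (part1 a) Ha)) => [h0|hall].
    by move: nx; rewrite (h0 x ax) eqxx.
  exact: ny (hall y).
- move=> Hn; split; first by exists 1; exact: oner_neq0.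
  move=> M HM.
  case: (classic (exists x, M x /\ x != 0)) => [[x [Mx nx]]|hno].
  + right => y; apply: NNPP => ny; apply: Hn; exists M; split.
      exact/part1.
    by split; [exists x | exists y].
  + left => x Mx; have [//|nx] := eqVneq x 0.
    by exfalso; apply: hno; exists x.
Qed.

Lemma sid_add a x y : isAIdeal a -> a x -> a y -> a (x + y).
Proof.
case=> a0 asub _ ax ay; have := asub x (0 - y) ax (asub 0 y a0 ay).
by rewrite sub0r opprK.
Qed.

Lemma part3a (a : A -> Prop) : isDstableIdeal a -> (forall x, D0A x -> a x) ->
     [/\ isDIdeal (plusD0 a), (forall d, D0 d -> plusD0 a d)
       & forall x, capA (plusD0 a) x <-> a x].
Proof.
case=> Ha aD hD0A; have [a0 asub amul] := Ha; split.
- split.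
  + by move=> u /plusD0_char [].
  + by apply/plusD0_char; split; [exact: isD_zero | exact: a0].
  + move=> u v /plusD0_char [Du au] /plusD0_char [Dv av]; apply/plusD0_char.
    by split; [exact: isD_sub | exact: asub].
  + move=> u v Du /plusD0_char [Dv av]; split; apply/plusD0_char; split.
    * exact: isD_comp.
    * exact: (aD u (v 1) Du av).
    * exact: isD_comp.
    * rewrite /= (eps_dec v (u 1)); apply: sid_add => //.
        by rewrite mulrC; exact: amul.
      by apply: hD0A; apply: D0A_single; exact: D0_eps.
- move=> d [Dd d1]; apply/plusD0_char; split => //; rewrite d1; exact: a0.
- move=> x; rewrite /capA plusD0_char; split.
    by case=> _; rewrite /mulop mulr1.
  by move=> ax; split; [exact: isD_mulop | rewrite /mulop mulr1].
Qed.

Lemma DD0D_least I : isDIdeal I -> (forall d, D0 d -> I d) -> forall f, DD0D f -> I f.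
Proof.
case=> ID I0 Isub Icomp HD0.
have Iadd : forall u v, I u -> I v -> I (fun x => u x + v x).
  move=> u v Hu Hv; have h := Isub _ _ I0 Hv; have := Isub _ _ Hu h.
  by apply: Pext => x; rewrite sub0r opprK.
have Isum : forall n (F : 'I_n -> A -> A), (forall i, I (F i)) ->
    I (fun x => \sum_(i < n) F i x).
  elim=> [|n IH] F HF.
    by apply: Pext I0 => x; rewrite big_ord0.
  apply: Pext (Iadd _ _ (IH (fun i => F (widen_ord (leqnSn n) i)) (fun i => HF _)) (HF ord_max)).
  by move=> x; rewrite big_ord_recr.
move=> f [n [u [d [v [H ->]]]]].
apply: (Isum n (fun i => u i \o (d i \o v i))) => i.
case: (H i) => Du Dd Dv.
have h1 := (Icomp _ _ Dv (HD0 _ Dd)).2.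
exact: (Icomp _ _ Du h1).1.
Qed.

Lemma part3b I : isDIdeal I -> (forall d, D0 d -> I d) ->
     [/\ isDstableIdeal (capA I), (forall x, D0A x -> capA I x)
       & forall f, plusD0 (capA I) f <-> I f].
Proof.
move=> HI HD0; have [ID I0 Isub Icomp] := HI.
have Iadd : forall u v, I u -> I v -> I (fun x => u x + v x).
  move=> u v Hu Hv; have h := Isub _ _ I0 Hv; have := Isub _ _ Hu h.
  by apply: Pext => x; rewrite sub0r opprK.
have key : forall f, I f -> I (mulop (f 1)).
  move=> f If; have Df := ID _ If.
  apply: Pext (Isub _ _ If (HD0 _ (D0_eps Df))) => x.
  by rewrite /eps /mulop opprB addrC subrK.
split.
- split; first split.
  + by apply: Pext I0 => x; rewrite /mulop mul0r.
  + move=> x y Ix Iy; apply: Pext (Isub _ _ Ix Iy) => z.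
    by rewrite /mulop mulrBl.
  + move=> r x Ix; apply: Pext (Icomp _ _ (isD_mulop r) Ix).1 => z.
    by rewrite /mulop /= mulrA.
  + move=> d x Dd Ix; apply: Pext (key _ (Icomp _ _ Dd Ix).1) => z.
    by rewrite /mulop /= mulr1.
- move=> x /DD0D_mulop; exact: DD0D_least.
- move=> f; rewrite plusD0_char; split.
    case=> Df H1; apply: Pext (Iadd _ _ H1 (HD0 _ (D0_eps Df))) => x.
    by rewrite /mulop -eps_dec.
  by move=> If; split; [exact: ID | exact: key].
Qed.

End H.

Theorem proposition3p4 (K : fieldType) (A : comAlgType K) :
  (* (1) *)
  (forall M : A -> Prop, (@isDsubmodule K A) M <-> (@isDstableIdeal K A) M) /\
  (* (2) *)
  ((@Dsimple K A) <->
     ~ (exists a : A -> Prop, (@isDstableIdeal K A) a /\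
          (exists x, a x /\ x != 0) /\ (exists y, ~ a y))) /\
  (* (3) bijection a |-> a + D_[0], inverse I |-> I \cap A *)
  (forall a : A -> Prop, (@isDstableIdeal K A) a -> (forall x, (@D0A K A) x -> a x) ->
     [/\ (@isDIdeal K A) ((@plusD0 K A) a), (forall d, (@D0 K A) d -> (@plusD0 K A) a d)
       & forall x, (@capA K A) ((@plusD0 K A) a) x <-> a x]) /\
  (forall I : (A -> A) -> Prop, (@isDIdeal K A) I -> (forall d, (@D0 K A) d -> I d) ->
     [/\ (@isDstableIdeal K A) ((@capA K A) I), (forall x, (@D0A K A) x -> (@capA K A) I x)
       & forall f, (@plusD0 K A) ((@capA K A) I) f <-> I f]) /\
  (* D D_[0] D = D_[0]*A + D_[0], least ideal of D containing D_[0] *)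
  (forall f : A -> A, (@DD0D K A) f <-> (@plusD0 K A) (@D0A K A) f) /\
  (@isDIdeal K A) (@DD0D K A) /\ (forall d, (@D0 K A) d -> (@DD0D K A) d) /\
  (forall I, (@isDIdeal K A) I -> (forall d, (@D0 K A) d -> I d) -> forall f, (@DD0D K A) f -> I f) /\
  (* D_[0]*A = A \cap D D_[0] D, and it is a D-stable ideal of A *)
  (forall x : A, (@D0A K A) x <-> (@capA K A) (@DD0D K A) x) /\
  (@isDstableIdeal K A) (@D0A K A).
Proof.
split; first exact: part1.
split; first exact: part2.
split; first exact: part3a.
split; first exact: part3b.
split; first by move=> f; rewrite plusD0_char; exact: DD0D_char.
split.
  split.
  - exact: DD0D_isD.
  - exact: DD0D_zero.
  - move=> u v Hu Hv; exact: DD0D_add Hu (DD0D_neg Hv).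
  - by move=> u v Du Hv; split; [exact: DD0D_compl | exact: DD0D_compr].
split.
  by move=> d Hd; apply: Pext (DD0D_single (isD_id A) Hd (isD_id A)) => x.
split; first exact: DD0D_least.
split; last exact: D0A_stable.
move=> x; split; first exact: DD0D_mulop.
by move/DD0D_1; rewrite /mulop mulr1.
Qed.
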